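(* For a real parameter $a\ge \tfrac12$, let $$\rho_a=\frac{1}{3(3+a)}\begin{pmatrix} 1&0&0&0&1&0&0&0&1\\ 0&a&0&1&0&0&0&0&0\\ 0&0&2&0&0&0&1&0&0\\ 0&1&0&2&0&0&0&0&0\\ 1&0&0&0&1&0&0&0&1\\ 0&0&0&0&0&a&0&1&0\\ 0&0&1&0&0&0&a&0&0\\ 0&0&0&0&0&1&0&2&0\\ 1&0&0&0&1&0&0&0&1 \end{pmatrix}$$ in the product basis $|i\rangle|j\rangle$, $i,j\in\{1,2,3\}$, ordered lexicographically, of $\mathbb{C}^3\otimes\mathbb{C}^3$. Let $\Gamma: M_3(\mathbb{C})\to M_3(\mathbb{C})$ be $$\Gamma(A)=\frac12\begin{pmatrix}a_{11}+a_{22}&-a_{12}&-a_{13}\\-a_{21}&a_{22}+a_{33}&-a_{23}\\-a_{31}&-a_{32}&a_{33}+a_{11}\end{pmatrix},\qquad A=(a_{ij}).$$ Then $\rho_a$ is a state whose partial transpose is positive semidefinite, the matrix $(I\otimes\Gamma)(\rho_a)$ has $\frac{a-1}{18+6a}$ as an eigenvalue (with eigenvector $|1\rangle|1\rangle+|2\rangle|2\rangle+|3\rangle|3\rangle$), its coefficient $D_9=-\det\big((I\otimes\Gamma)(\rho_a)\big)$ is strictly positive whenever $\tfrac12\le a<1$, and consequently $\rho_a$ is entangled for every $a$ with $\tfrac12\le a<1$.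
   Context: A state on $\mathbb{C}^3\otimes\mathbb{C}^3$ is a positive semidefinite $9\times 9$ matrix of trace one; it is separable if it is a convex combination of product states $\rho_A\otimes\rho_B$, and entangled otherwise. The partial transpose $\rho^{T_B}$ is defined by $\langle m|\langle\mu|\rho^{T_B}|n\rangle|\nu\rangle=\langle m|\langle\nu|\rho|n\rangle|\mu\rangle$. $(I\otimes\Gamma)(\rho)$ means applying $\Gamma$ to each $3\times3$ block $\rho_{(i,\cdot),(k,\cdot)}$ of $\rho$ (blocks indexed by the first factor). $D_9$ denotes the constant coefficient in $\det(\lambda I-M)=\lambda^9+D_1\lambda^8+\cdots+D_9$ for $M=(I\otimes\Gamma)(\rho_a)$. The map $\Gamma$ is a positive (indecomposable) linear map, i.e., it maps positive semidefinite matrices to positive semidefinite matrices. *)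

(* Defs.v *)
From HB Require Import structures.
From mathcomp Require Import all_boot all_order all_algebra.
From mathcomp Require Import complex mxtens.
Set Implicit Arguments. Unset Strict Implicit. Unset Printing Implicit Defensive.
Import Order.TTheory GRing.Theory Num.Theory.
Local Open Scope ring_scope.

Section QInfo.
Variable C : numClosedFieldType.

Definition adjmx {m n} (A : 'M[C]_(m, n)) : 'M[C]_(n, m) := (map_mx Num.conj A)^T.

Definition psd {n} (A : 'M[C]_n) : Prop :=
  A = adjmx A /\ forall v : 'cV[C]_n, 0 <= (adjmx v *m A *m v) 0 0.

Definition is_state {n} (A : 'M[C]_n) : Prop := psd A /\ \tr A = 1.

(* separable state on C^m (x) C^n: finite convex combination of product states
   rho_A (x) rho_B; the basis |i>|j> is indexed by mxtens_index (i,j) = i*n+j *)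
Definition separable {m n} (rho : 'M[C]_(m * n)) : Prop :=
  exists (k : nat) (p : 'I_k -> C) (A : 'I_k -> 'M[C]_m) (B : 'I_k -> 'M[C]_n),
    [/\ forall i, 0 <= p i,
        \sum_(i < k) p i = 1,
        forall i, is_state (A i) /\ is_state (B i)
      & rho = \sum_(i < k) p i *: (A i *t B i)].

Definition entangled {m n} (rho : 'M[C]_(m * n)) : Prop :=
  is_state rho /\ ~ separable rho.

(* partial transpose on the second factor:
   <m|<mu| rho^TB |n>|nu> = <m|<nu| rho |n>|mu> *)
Definition ptB {m n} (rho : 'M[C]_(m * n)) : 'M[C]_(m * n) :=
  \matrix_(x, y)
    rho (mxtens_index ((mxtens_unindex x).1, (mxtens_unindex y).2))
        (mxtens_index ((mxtens_unindex y).1, (mxtens_unindex x).2)).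

(* (I (x) Phi)(rho): apply Phi to each n x n block rho_{(i,.),(k,.)} *)
Definition idtens {m n} (Phi : 'M[C]_n -> 'M[C]_n) (rho : 'M[C]_(m * n))
  : 'M[C]_(m * n) :=
  \matrix_(x, y)
    Phi (\matrix_(mu, nu) rho (mxtens_index ((mxtens_unindex x).1, mu))
                             (mxtens_index ((mxtens_unindex y).1, nu)))
        (mxtens_unindex x).2 (mxtens_unindex y).2.

(* the map Gamma on M_3: diagonal entries (a_ii + a_{i+1,i+1})/2 (indices
   cyclic, ordS = cyclic successor), off-diagonal entries -a_ij/2 *)
Definition Gamma (A : 'M[C]_3) : 'M[C]_3 :=
  \matrix_(i, j) if i == j then (A i i + A (ordS i) (ordS i)) / 2
                 else - (A i j) / 2.

Definition maxent_vec : 'cV[C]_(3 * 3) :=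
  \col_x (if (mxtens_unindex x).1 == (mxtens_unindex x).2 then 1 else 0).

End QInfo.

Definition rho_pattern {C : numClosedFieldType} (a : C) : seq (seq C) :=
  [:: [:: 1; 0; 0; 0; 1; 0; 0; 0; 1];
      [:: 0; a; 0; 1; 0; 0; 0; 0; 0];
      [:: 0; 0; 2; 0; 0; 0; 1; 0; 0];
      [:: 0; 1; 0; 2; 0; 0; 0; 0; 0];
      [:: 1; 0; 0; 0; 1; 0; 0; 0; 1];
      [:: 0; 0; 0; 0; 0; a; 0; 1; 0];
      [:: 0; 0; 1; 0; 0; 0; a; 0; 0];
      [:: 0; 0; 0; 0; 0; 1; 0; 2; 0];
      [:: 1; 0; 0; 0; 1; 0; 0; 0; 1]].

(* rho_a = 1/(3(3+a)) * pattern, row/column x = 3*i + j for |i>|j> (0-based) *)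
Definition rho_a (R : rcfType) (a : R) : 'M[R[i]]_(3 * 3) :=
  (1 / (3 * (3 + (a%:C)%C))) *:
    \matrix_(x, y) nth 0 (nth [::] (rho_pattern (a%:C)%C) x) y.

(* Main.v *)
Require Import Defs.
From HB Require Import structures.
From mathcomp Require Import all_boot all_order all_algebra.
From mathcomp Require Import complex mxtens sesquilinear spectral.
From mathcomp.algebra_tactics Require Import ring lra.
Import Order.TTheory GRing.Theory Num.Theory.
Set Implicit Arguments. Unset Strict Implicit. Unset Printing Implicit Defensive.
Local Open Scope ring_scope.
Arguments addn : simpl nomatch.
Arguments subn : simpl nomatch.
Arguments muln : simpl nomatch.

Lemma amgm3 (R : realFieldType) (x y z : R) : 0 <= x -> 0 <= y -> 0 <= z ->
  0 <= x^2*y + y^2*z + z^2*x - 3*x*y*z.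
Proof.
move=> hx hy hz.
have Ez : x^2*y + y^2*z + z^2*x - 3*x*y*z = z*(y-x)^2 + x*((z-y)*(z-x)) by ring.
have Ey : x^2*y + y^2*z + z^2*x - 3*x*y*z = y*(x-z)^2 + z*((y-x)*(y-z)) by ring.
have Ex : x^2*y + y^2*z + z^2*x - 3*x*y*z = x*(z-y)^2 + y*((x-z)*(x-y)) by ring.
have [hxy|hxy] := lerP x y; have [hyz|hyz] := lerP y z.
- rewrite Ez; apply: addr_ge0; apply: mulr_ge0 => //; try apply: sqr_ge0; apply: mulr_ge0; lra.
- rewrite Ey; apply: addr_ge0; apply: mulr_ge0 => //; try apply: sqr_ge0; apply: mulr_ge0; lra.
- have [hxz|hxz] := lerP x z.
  + rewrite Ez; apply: addr_ge0; apply: mulr_ge0 => //; try apply: sqr_ge0; apply: mulr_ge0; lra.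
  + rewrite Ex; apply: addr_ge0; apply: mulr_ge0 => //; try apply: sqr_ge0; apply: mulr_ge0; lra.
- rewrite Ex; apply: addr_ge0; apply: mulr_ge0 => //; try apply: sqr_ge0; apply: mulr_ge0; lra.
Qed.

Lemma sq0 (R : realFieldType) (u v : R) : 2*u^2 + v^2 = 0 -> u = 0 /\ v = 0.
Proof.
move=> h.
have hu : u^2 = 0 by apply/le_anti/andP; split; nra.
have hv : v^2 = 0 by apply/le_anti/andP; split; nra.
by split; apply/eqP; rewrite -(sqrf_eq0 (R:=R)) ?hu ?hv; apply/eqP; rewrite ?hu ?hv.
Qed.
Arguments sq0 {R u v}.

Lemma Fpos (R : realFieldType) (x1 x2 x3 y1 y2 y3 : R) :
  0 <= x1^2*(2*y1^2 + y3^2) + x2^2*(2*y2^2+y1^2) + x3^2*(2*y3^2+y2^2)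
       - (x1*y1+x2*y2+x3*y3)^2.
Proof.
set e1 := 2*y1^2 + y3^2; set e2 := 2*y2^2+y1^2; set e3 := 2*y3^2+y2^2.
set F := _ - _.
have hP : 0 <= (y1^2)^2*(y2^2) + (y2^2)^2*(y3^2) + (y3^2)^2*(y1^2) - 3*(y1^2)*(y2^2)*(y3^2).
  by apply: amgm3; apply: sqr_ge0.
have he1 : 0 <= e1 by rewrite /e1; nra.
have he2 : 0 <= e2 by rewrite /e2; nra.
have he3 : 0 <= e3 by rewrite /e3; nra.
have Eid : e1*e2*e3*F = ((y1^2)^2*(y2^2) + (y2^2)^2*(y3^2) + (y3^2)^2*(y1^2) - 3*(y1^2)*(y2^2)*(y3^2))
   * (e1*x1^2 + e2*x2^2 + e3*x3^2)
   + e3*(e1*x1*y2 - e2*x2*y1)^2 + e2*(e1*x1*y3 - e3*x3*y1)^2 + e1*(e2*x2*y3-e3*x3*y2)^2.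
  by rewrite /F /e1 /e2 /e3; ring.
have [h0|h0] := eqVneq (e1*e2*e3) 0.
- move/eqP: h0; rewrite !mulf_eq0 => /orP[/orP[]|] /eqP h.
  + have [a1 a3] := sq0 h.
    rewrite /F /e2 /e3 a1 a3; nra.
  + have [a2 a1] := sq0 h.
    rewrite /F /e1 /e3 a1 a2; nra.
  + have [a3 a2] := sq0 h.
    rewrite /F /e1 /e2 a2 a3; nra.
- have hpos : 0 < e1*e2*e3 by rewrite lt_def h0 /= !mulr_ge0.
  have : 0 <= e1*e2*e3*F.
    rewrite Eid; have hS : 0 <= e1*x1^2 + e2*x2^2 + e3*x3^2.
      by repeat apply: addr_ge0; apply: mulr_ge0 => //; apply: sqr_ge0.
    by repeat apply: addr_ge0; apply: mulr_ge0 => //; apply: sqr_ge0.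
  by rewrite pmulr_rge0.
Qed.

Lemma adj_tstar (C : numClosedFieldType) m n (A : 'M[C]_(m,n)) : adjmx A = (A ^t* )%sesqui.
Proof. by rewrite /adjmx map_trmx. Qed.

Lemma GLpos (C : numClosedFieldType) n (A G : 'M[C]_n) : psd A ->
  (forall u : 'cV_n, 0 <= (adjmx u *m G *m u) 0 0) ->
  0 <= \sum_i \sum_k A i k * G i k.
Proof.
move=> [hA hpos] hG.
have nA : A \is normalmx by apply/normalmxP; rewrite -adj_tstar -hA.
have /orthomx_spectralP EA := nA.
set P := spectralmx A in EA; set D := spectral_diag A in EA.
have Pu : P \is unitarymx by exact: spectral_unitarymx.
rewrite invmx_unitary // in EA.
have hPP : P *m (P ^t* )%sesqui = 1%:M by apply/unitarymxP.
have hD : forall j, 0 <= D 0 j.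
  move=> j.
  have E1 : P *m A *m (P ^t* )%sesqui = diag_mx D.
    by rewrite EA !mulmxA hPP mul1mx -mulmxA hPP mulmx1.
  have -> : D 0 j = (P *m A *m (P ^t* )%sesqui) j j by rewrite E1 mxE eqxx mulr1n.
  have := hpos (\col_i Num.conj (P j i)).
  congr (_ <= _); rewrite !mxE; apply: eq_bigr => k _; rewrite !mxE.
  congr (_ * _); apply: eq_bigr => i _; rewrite !mxE conjCK //.
have EAik : forall i k, A i k = \sum_j Num.conj (P j i) * (D 0 j * P j k).
  move=> i k; rewrite EA mul_mx_diag !mxE; apply: eq_bigr => j _; rewrite !mxE mulrA //.
under eq_bigr do under eq_bigr do rewrite EAik mulr_suml.
under eq_bigr do rewrite exchange_big /=.
rewrite exchange_big /=.
apply: sumr_ge0 => j _.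
have -> : \sum_i \sum_k Num.conj (P j i) * (D 0 j * P j k) * G i k =
   D 0 j * (adjmx (\col_i P j i) *m G *m (\col_i P j i)) 0 0.
  rewrite !mxE mulr_sumr [LHS]exchange_big /=; apply: eq_bigr => k _.
  rewrite !mxE mulr_suml mulr_sumr; apply: eq_bigr => i _; rewrite !mxE; ring.
by apply: mulr_ge0.
Qed.


Lemma ord_inord n m (H : (m < n.+1)%N) : Ordinal H = inord m.
Proof. by apply: val_inj; rewrite /= inordK. Qed.

Lemma oS0 : ordS (ord0 : 'I_3) = lift ord0 ord0. Proof. exact: val_inj. Qed.
Lemma oS1 : ordS (lift ord0 ord0 : 'I_3) = lift ord0 (lift ord0 ord0). Proof. exact: val_inj. Qed.
Lemma oS2 : ordS (lift ord0 (lift ord0 ord0) : 'I_3) = ord0. Proof. exact: val_inj. Qed.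
Lemma oP0 : ord_pred (ord0 : 'I_3) = lift ord0 (lift ord0 ord0). Proof. exact: val_inj. Qed.
Lemma oP1 : ord_pred (lift ord0 ord0 : 'I_3) = ord0. Proof. exact: val_inj. Qed.
Lemma oP2 : ord_pred (lift ord0 (lift ord0 ord0) : 'I_3) = lift ord0 ord0. Proof. exact: val_inj. Qed.
Definition oSP := (oS0, oS1, oS2, oP0, oP1, oP2).

Definition Hm (C : numClosedFieldType) (u : 'cV[C]_3) : 'M[C]_3 :=
  \matrix_(j,l) if j == l then (Num.conj (u j 0) * u j 0 + Num.conj (u (ord_pred j) 0) * u (ord_pred j) 0)/2
                else - (Num.conj (u j 0) * u l 0)/2.

Lemma uGu (C : numClosedFieldType) (u : 'cV[C]_3) B :
  (adjmx u *m Gamma B *m u) 0 0 = \sum_j \sum_l B j l * Hm u j l.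
Proof.
rewrite ?(big_ord_recl, big_ord0, mxE) /=.
rewrite !oSP; ring.
Qed.

Section Pure.
Variable R : rcfType.
Local Notation C := (R[i]).

Lemma nrE (x : C) : `|x| = ((complex.Re `|x|)%:C)%C.
Proof. rewrite [LHS]complexE (ger0_Im (normr_ge0 x)) rmorph0 mulr0 addr0 //. Qed.

Lemma pure3 (u w : 'cV[C]_3) :
  0 <= (adjmx w *m Hm u *m w) 0 0.
Proof.
set u0 := u ord0 0; set u1 := u (lift ord0 ord0) 0; set u2 := u (lift ord0 (lift ord0 ord0)) 0.
set w0 := w ord0 0; set w1 := w (lift ord0 ord0) 0; set w2 := w (lift ord0 (lift ord0 ord0)) 0.
have -> : (adjmx w *m Hm u *m w) 0 0 =
   ((`|w0|^+2 * (2 * `|u0|^+2 + `|u2|^+2) + `|w1|^+2 * (2 * `|u1|^+2 + `|u0|^+2)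
    + `|w2|^+2 * (2 * `|u2|^+2 + `|u1|^+2)) - `|u0 * w0 + u1 * w1 + u2 * w2|^+2) / 2.
  rewrite !normCK !rmorphD !rmorphM.
  rewrite ?(big_ord_recl, big_ord0, mxE) /= !oSP -/u0 -/u1 -/u2 -/w0 -/w1 -/w2; ring.
apply: divr_ge0; last by [].
rewrite subr_ge0.
apply: (le_trans (y := (`|u0| * `|w0| + `|u1| * `|w1| + `|u2| * `|w2|) ^+ 2)).
  rewrite lerXn2r ?nnegrE ?normr_ge0 ?addr_ge0 ?mulr_ge0 ?normr_ge0 //.
  by rewrite -!normrM; apply: (le_trans (ler_normD _ _)); rewrite lerD2r ler_normD.
have := Fpos (complex.Re `|w0|) (complex.Re `|w1|) (complex.Re `|w2|)
             (complex.Re `|u0|) (complex.Re `|u1|) (complex.Re `|u2|).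
rewrite -ler0c !(rmorphB, rmorphD, rmorphM, rmorphXn, rmorph_nat) /= -!nrE subr_ge0.
move=> h; apply: (le_trans _ (le_trans h _)); rewrite le_eqVlt; apply/orP; left; apply/eqP; ring.
Qed.
End Pure.

Lemma GammaPos (R : rcfType) (B : 'M[R[i]]_3) : psd B ->
  forall u : 'cV_3, 0 <= (adjmx u *m Gamma B *m u) 0 0.
Proof. by move=> hB u; rewrite uGu; apply: GLpos => // w; apply: pure3. Qed.

Lemma keyAB (R : rcfType) (A B : 'M[R[i]]_3) : psd A -> psd B ->
  0 <= \sum_i \sum_k A i k * Gamma B i k.
Proof. by move=> hA hB; apply: GLpos => //; apply: GammaPos. Qed.

Lemma idtens_lin (C : numClosedFieldType) k (p : 'I_k -> C) (T : 'I_k -> 'M[C]_(3*3)) :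
  idtens (@Gamma C) (\sum_i p i *: T i) = \sum_i p i *: idtens (@Gamma C) (T i).
Proof.
apply/matrixP => x y; rewrite summxE.
under [RHS]eq_bigr do rewrite !mxE.
rewrite !mxE !summxE.
case: eqP => _.
- under [X in X + _]eq_bigr do rewrite mxE.
  under [X in _ + X]eq_bigr do rewrite mxE.
  rewrite -big_split /= mulr_suml; apply: eq_bigr => i _; ring.
- under [X in - X]eq_bigr do rewrite mxE.
  rewrite -sumrN mulr_suml; apply: eq_bigr => i _; ring.
Qed.

Definition phi (C : numClosedFieldType) (rho : 'M[C]_(3*3)) :=
  (adjmx (maxent_vec C) *m idtens (@Gamma C) rho *m maxent_vec C) 0 0.

Lemma phi_lin (C : numClosedFieldType) k (p : 'I_k -> C) (T : 'I_k -> 'M[C]_(3*3)) :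
  phi (\sum_i p i *: T i) = \sum_i p i * phi (T i).
Proof.
rewrite /phi idtens_lin mulmx_sumr mulmx_suml summxE; apply: eq_bigr => i _.
by rewrite -scalemxAr -scalemxAl mxE.
Qed.

Lemma sum_tens (C : numClosedFieldType) (F : 'I_(3*3) -> C) :
  \sum_x F x = \sum_i \sum_j F (mxtens_index (i, j)).
Proof.
rewrite pair_big /= (reindex (@mxtens_index 3 3)) /=.
  by apply: eq_bigr => -[i j] _.
by exists (@mxtens_unindex 3 3) => z _; [apply: mxtens_indexK | apply: (@mxtens_unindexK 3 3)].
Qed.

Lemma idtens_tens (C : numClosedFieldType) (A B : 'M[C]_3) :
  idtens (@Gamma C) (A *t B) = A *t Gamma B.
Proof.
apply/matrixP => x y; rewrite !mxE !mxtens_indexK /=.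
case: eqP => _; ring.
Qed.

Lemma phi_tens (C : numClosedFieldType) (A B : 'M[C]_3) :
  phi (A *t B) = \sum_i \sum_k A i k * Gamma B i k.
Proof.
rewrite /phi idtens_tens; set G := Gamma B.
rewrite mxE sum_tens.
rewrite ?(big_ord_recl, big_ord0).
rewrite !mxE !sum_tens.
rewrite ?(big_ord_recl, big_ord0).
rewrite !mxE !mxtens_indexK /=.
rewrite ?(rmorph0, rmorph1).
ring.
Qed.

Section Main.
Variable R : rcfType.
Variable a : R.
Hypothesis ha : 1 / 2 <= a.
Local Notation C := (R[i]).
Local Notation ac := ((a%:C)%C : C).

Lemma ac_ge : 1 / 2 <= ac.
Proof.
have e : ((1 / 2 : R)%:C)%C = 1 / 2 :> C by rewrite fmorph_div rmorph1 rmorph_nat.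
by rewrite -e lecR.
Qed.

Lemma ac_gt0 : 0 < ac.
Proof. apply: (lt_le_trans _ ac_ge); by rewrite divr_gt0 ?ltr01 ?ltr0n. Qed.

Lemma ne1 : 3 + ac != 0.
Proof. by rewrite gt_eqF // addr_gt0 // ac_gt0. Qed.
Lemma ne2 : ac != 0.
Proof. by rewrite gt_eqF // ac_gt0. Qed.
Lemma ne3 : 1 + ac != 0.
Proof. by rewrite gt_eqF // addr_gt0 // ac_gt0. Qed.
Lemma ne4 : ac + 2 != 0.
Proof. by rewrite gt_eqF // addr_gt0 // ac_gt0. Qed.

Lemma conj_ac : Num.conj ac = ac.
Proof. by apply: conj_Creal; apply: gtr0_real; apply: ac_gt0. Qed.

Lemma trace_rho : \tr (rho_a a) = 1.
Proof.
rewrite /mxtrace ?(big_ord_recl, big_ord0, mxE) /=.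
by field; rewrite ne1.
Qed.

Lemma conj_c : Num.conj (1 / (3 * (3 + ac))) = 1 / (3 * (3 + ac)).
Proof. apply: conj_Creal; apply: gtr0_real; rewrite divr_gt0 ?mulr_gt0 ?addr_gt0 ?ac_gt0 //. Qed.

Lemma conj2 : Num.conj (2 : C) = 2.
Proof. by apply: conj_Creal; apply: gtr0_real. Qed.

Lemma c_gt0 : 0 < 1 / (3 * (3 + ac)).
Proof. by rewrite divr_gt0 ?mulr_gt0 ?addr_gt0 ?ac_gt0. Qed.

Lemma herm_rho : rho_a a = adjmx (rho_a a).
Proof.
apply/matrixP => x y; rewrite !mxE.
case: x => [[|[|[|[|[|[|[|[|[|//]]]]]]]]] Hx];
case: y => [[|[|[|[|[|[|[|[|[|//]]]]]]]]] Hy]; rewrite /=;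
  (rewrite conj_Creal //; apply: realM; [apply: gtr0_real; exact: c_gt0 |
    apply: ger0_real; first [exact: lexx | exact: ler01 | exact: ler0n | exact: (ltW ac_gt0)]]).
Qed.

Lemma cjlin (x y : C) : Num.conj (x + y / 2) = Num.conj x + Num.conj y / 2.
Proof. rewrite rmorphD rmorphM fmorphV; congr (_ + _ * _^-1); exact: conj2. Qed.

Lemma cjs3 (x y z : C) : Num.conj (x + y + z) = Num.conj x + Num.conj y + Num.conj z.
Proof. by rewrite !rmorphD. Qed.

Lemma cjge (x : C) : 0 <= Num.conj x * x.
Proof. by rewrite mulrC -normCK exprn_ge0. Qed.

Lemma qf_rho (v : 'cV[C]_(3*3)) : 0 <= (adjmx v *m rho_a a *m v) 0 0.
Proof.
rewrite ?(big_ord_recl, big_ord0, mxE) /=.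
set c := 1 / _.
set v0 := v ord0 0.
set v1 := v (lift ord0 ord0) 0.
set v2 := v (lift ord0 (lift ord0 ord0)) 0.
set v3 := v (lift ord0 (lift ord0 (lift ord0 ord0))) 0.
set v4 := v (lift ord0 (lift ord0 (lift ord0 (lift ord0 ord0)))) 0.
set v5 := v (lift ord0 (lift ord0 (lift ord0 (lift ord0 (lift ord0 ord0))))) 0.
set v6 := v (lift ord0 (lift ord0 (lift ord0 (lift ord0 (lift ord0 (lift ord0 ord0)))))) 0.
set v7 := v (lift ord0 (lift ord0 (lift ord0 (lift ord0 (lift ord0 (lift ord0 (lift ord0 ord0))))))) 0.
set v8 := v (lift ord0 (lift ord0 (lift ord0 (lift ord0 (lift ord0 (lift ord0 (lift ord0 (lift ord0 ord0)))))))) 0.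
have hah : 0 <= ac - 1/2 by rewrite subr_ge0 ac_ge.
have hQ : 0 <= c * (Num.conj (v0 + v4 + v8) * (v0 + v4 + v8)
   + (ac - 1/2) * (Num.conj v1 * v1) + 2 * (Num.conj (v3 + v1/2) * (v3 + v1/2))
   + (ac - 1/2) * (Num.conj v6 * v6) + 2 * (Num.conj (v2 + v6/2) * (v2 + v6/2))
   + (ac - 1/2) * (Num.conj v5 * v5) + 2 * (Num.conj (v7 + v5/2) * (v7 + v5/2))).
  apply: mulr_ge0; first exact: ltW c_gt0.
  repeat apply: addr_ge0; try exact: cjge; apply: mulr_ge0;
    first [exact: hah | exact: ler0n | exact: cjge].
apply: (le_trans hQ); rewrite !cjlin cjs3 le_eqVlt; apply/orP; left; apply/eqP.
rewrite /c; field; exact: ne1.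
Qed.

End Main.

Section Main2.
Variable R : rcfType.
Variable a : R.
Hypothesis ha : 1 / 2 <= a.
Local Notation C := (R[i]).
Local Notation ac := ((a%:C)%C : C).

Lemma ptB_rho : ptB (rho_a a) = rho_a a.
Proof.
apply/matrixP => x y; rewrite !mxE.
case: x => [[|[|[|[|[|[|[|[|[|//]]]]]]]]] Hx];
case: y => [[|[|[|[|[|[|[|[|[|//]]]]]]]]] Hy]; reflexivity.
Qed.

Lemma ne5 : 18 + 6 * ac != 0.
Proof. by rewrite gt_eqF // addr_gt0 // mulr_gt0 // ac_gt0. Qed.

Lemma eigen_rho : idtens (@Gamma C) (rho_a a) *m maxent_vec C =
   (((a - 1) / (18 + 6 * a))%:C)%C *: maxent_vec C.
Proof.
have e : (((a - 1) / (18 + 6 * a))%:C)%C = (ac - 1) / (18 + 6 * ac) :> C.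
  by rewrite fmorph_div rmorphB rmorphD rmorphM !rmorph_nat rmorph1.
rewrite e.
apply/matrixP => x y; rewrite !mxE.
rewrite ?(big_ord_recl, big_ord0) !mxE.
case: x => [[|[|[|[|[|[|[|[|[|//]]]]]]]]] Hx]; rewrite /=;
  (field; repeat (apply/andP; split); first [exact: ne1 | exact: ne5]).
Qed.

Definition Lpat (x : C) : seq (seq C) :=
  [:: [:: 1; 0; 0; 0; 0; 0; 0; 0; 0];
      [:: 0; 1; 0; 0; 0; 0; 0; 0; 0];
      [:: 0; 0; 1; 0; 0; 0; 0; 0; 0];
      [:: 0; - 1 / (x + 2); 0; 1; 0; 0; 0; 0; 0];
      [:: - 1 / (1 + x); 0; 0; 0; 1; 0; 0; 0; 0];
      [:: 0; 0; 0; 0; 0; 1; 0; 0; 0];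
      [:: 0; 0; - 1 / 3; 0; 0; 0; 1; 0; 0];
      [:: 0; 0; 0; 0; 0; - 1 / (x + 2); 0; 1; 0];
      [:: - 1 / (1 + x); 0; 0; 0; - 1 / x; 0; 0; 0; 1]].

Definition Upat (x : C) : seq (seq C) :=
  [:: [:: 1 + x; 0; 0; 0; -1; 0; 0; 0; -1];
      [:: 0; x + 2; 0; -1; 0; 0; 0; 0; 0];
      [:: 0; 0; 3; 0; 0; 0; -1; 0; 0];
      [:: 0; 0; 0; (3 * x + 5) / (x + 2); 0; 0; 0; 0; 0];
      [:: 0; 0; 0; 0; x * (x + 2) / (1 + x); 0; 0; 0; - (x + 2) / (1 + x)];
      [:: 0; 0; 0; 0; 0; x + 2; 0; -1; 0];
      [:: 0; 0; 0; 0; 0; 0; (3 * x + 5) / 3; 0; 0];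
      [:: 0; 0; 0; 0; 0; 0; 0; (3 * x + 5) / (x + 2); 0];
      [:: 0; 0; 0; 0; 0; 0; 0; 0; (x + 2) * (x - 1) / x]].

Definition Lm (x : C) : 'M[C]_(3*3) := \matrix_(i, j) nth 0 (nth [::] (Lpat x) i) j.
Definition Um (x : C) : 'M[C]_(3*3) :=
  (1 / (6 * (3 + x))) *: \matrix_(i, j) nth 0 (nth [::] (Upat x) i) j.

Lemma LU_M : idtens (@Gamma C) (rho_a a) = Lm ac *m Um ac.
Proof.
apply/matrixP => x y; rewrite !mxE.
rewrite ?(big_ord_recl, big_ord0) !mxE.
case: x => [[|[|[|[|[|[|[|[|[|//]]]]]]]]] Hx];
case: y => [[|[|[|[|[|[|[|[|[|//]]]]]]]]] Hy]; rewrite /=;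
  (field; repeat (apply/andP; split); first [exact: ne1 | exact: ne5 | exact: ne2 | exact: ne3 | exact: ne4]).
Qed.

Lemma det_L : \det (Lm ac) = 1.
Proof.
rewrite det_trig.
  by rewrite ?(big_ord_recl, big_ord0) !mxE /= !mulr1.
apply/is_trig_mxP => i j.
case: i => [[|[|[|[|[|[|[|[|[|//]]]]]]]]] Hi];
case: j => [[|[|[|[|[|[|[|[|[|//]]]]]]]]] Hj]; rewrite ?mxE //.
Qed.

Lemma det_U : \det (Um ac) =
  (1 / (6 * (3 + ac))) ^+ 9 * ((ac + 2) ^+ 2 * (3 * ac + 5) ^+ 3 * (ac - 1)).
Proof.
rewrite -det_tr det_trig.
  rewrite ?(big_ord_recl, big_ord0) !mxE /=.
  field; repeat (apply/andP; split); first [exact: ne1 | exact: ne5 | exact: ne2 | exact: ne3 | exact: ne4].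
apply/is_trig_mxP => i j.
case: i => [[|[|[|[|[|[|[|[|[|//]]]]]]]]] Hi];
case: j => [[|[|[|[|[|[|[|[|[|//]]]]]]]]] Hj]; rewrite ?mxE /= ?mulr0 //.
Qed.

End Main2.

Lemma vv3 (C : numClosedFieldType) : (adjmx (maxent_vec C) *m maxent_vec C) 0 0 = 3.
Proof.
rewrite ?(big_ord_recl, big_ord0, mxE) /= ?(rmorph0, rmorph1, mulr0, mulr1, add0r, addr0).
by ring.
Qed.

Theorem mainTheorem2 (R : rcfType) (a : R) (ha : 1 / 2 <= a) :
  let M := idtens (@Gamma (R[i])) (rho_a a) in
  is_state (rho_a a) /\
      psd (ptB (rho_a a)) /\
      M *m maxent_vec (R[i]) = (((a - 1) / (18 + 6 * a))%:C)%C *: maxent_vec (R[i]) /\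
      (char_poly M)`_0 = - \det M /\
      (a < 1 -> 0 < (char_poly M)`_0) /\
    (a < 1 -> entangled (rho_a a)).
Proof.
move=> M.
have hst : is_state (rho_a a).
  split; last exact: trace_rho.
  by split; [exact: herm_rho | exact: qf_rho].
have hcp : (char_poly M)`_0 = - \det M.
  by rewrite char_poly_det -signr_odd /= expr1 mulN1r.
split; first exact: hst.
split; first by rewrite ptB_rho; case: hst.
split; first exact: eigen_rho.
split; first exact: hcp.
split.
  move=> ha1; rewrite hcp /M (LU_M ha) det_mulmx det_L // det_U // mul1r.
  have h1 : 0 < 1 - (a%:C)%C :> R[i].
    by rewrite subr_gt0 -(rmorph1 (real_complex R)) ltcR.
  rewrite oppr_gt0 pmulr_rlt0 ?ltr01 // pmulr_rlt0; last first.
    by apply: exprn_gt0; rewrite ?invr_gt0 ?divr_gt0 ?mulr_gt0 ?addr_gt0 ?(ac_gt0 ha).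
  rewrite pmulr_rlt0; last first.
    by apply: mulr_gt0; apply: exprn_gt0; rewrite ?addr_gt0 ?mulr_gt0 ?(ac_gt0 ha).
  by rewrite subr_lt0 -(rmorph1 (real_complex R)) ltcR.
move=> ha1; split; first exact: hst.
move=> [k [p [A [B [hp hsum hAB Erho]]]]].
have hpos : 0 <= phi (rho_a a).
  rewrite Erho phi_lin; apply: sumr_ge0 => i _; apply: mulr_ge0 => //.
  rewrite phi_tens; have [[hA _] [hB _]] := hAB i; exact: keyAB.
have : phi (rho_a a) = (((a - 1) / (18 + 6 * a))%:C)%C * 3.
  by rewrite /phi -mulmxA eigen_rho // -scalemxAr mxE vv3.
move=> E; move: hpos; rewrite E.
have hl : (a - 1) / (18 + 6 * a) < 0.
  rewrite pmulr_llt0 ?invr_gt0; lra.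
rewrite pmulr_lge0 ?ltr0n // -(rmorph0 (real_complex R)) lecR.
by rewrite leNgt hl.
Qed.
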